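(* Consider the finite-horizon betting problem described in the context, with horizon $H\in\mathbb{N}$ and CRRA utility $u_1(\cdot;\alpha)$, $\alpha\ge 0$ (so $u_1(w;\alpha)=w^\alpha/\alpha$ if $\alpha>0$ and $u_1(w;0)=\ln w$). Then the optimal betting policy $\pi^*_{(\theta,u_1,H)}$, defined by the Bellman recursion of the context, is independent of the wealth variable: for every deck $\mathbf d\in\Omega$, every round index $n<H$ and all $w,w'>0$, $$\pi^*_{(\theta,u_1,H)}(\mathbf d,w,n)=\pi^*_{(\theta,u_1,H)}(\mathbf d,w',n),$$ i.e. the set of maximizing bets $b\in[0,0.5]$ in the Bellman equation at state $(\mathbf d,w,n)$ is the same as at $(\mathbf d,w',n)$.
   Context: A player repeatedly plays rounds of a card game (Blackjack) against a dealer, following a fixed in-round decision rule $\theta$. The composition of the deck before each round (the ''origin deck'') lies in a finite set $\Omega\subset\mathbb{Z}_{\ge0}^{10}$ and the sequence of origin decks $\mathbf d_0,\mathbf d_1,\dots$ (starting from the full deck $\bar{\mathbf d}$) together with the round returns forms a time-homogeneous process: the return $X_\theta^{\mathbf d_n}$ of round $n$ (per unit bet) takes values in $R=\{-2,-1,0,1,1.5,2\}$, and the joint probability $p(\mathbf d',x\mid\mathbf d)=\mathbb P(\mathbf d_{n+1}=\mathbf d',X^{\mathbf d}_\theta=x\mid \mathbf d_n=\mathbf d)$ depends only on $\mathbf d,\mathbf d',x$ (not on $n$ nor on the bets or wealth). Before round $n$ the player, with wealth $W_n$ ($W_0=1$), bets a fraction $\pi_n\in[0,0.5]$ of wealth,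 and $W_{n+1}=(1+\pi_n X_\theta^{\mathbf d_n})W_n$. States are $\psi=(\mathbf d,w,n)$ with $\mathbf d\in\Omega$, $w>0$, $n\in\mathbb Z_{\ge 0}$; a betting policy is a map $\pi$ from states to $[0,0.5]$. The utility is $u_1(w;\alpha)=w^\alpha/\alpha$ for $\alpha>0$ and $\ln w$ for $\alpha=0$. The optimal value and optimal policy for horizon $H$ are defined by $V^*(\mathbf d,w,H)=u_1(w;\alpha)$ and, for $n<H$, $$V^*(\mathbf d,w,n)=\max_{b\in[0,0.5]}\sum_{x\in R}\sum_{\mathbf d'}p(\mathbf d',x\mid\mathbf d)\,V^*(\mathbf d',w(1+bx),n+1),$$ with $\pi^*_{(\theta,u_1,H)}(\mathbf d,w,n)$ the argmax of the same expression. *)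

(* Defs.v *)
From HB Require Import structures.
From mathcomp Require Import all_boot all_order all_algebra.
From mathcomp Require Import all_classical all_reals all_analysis.
Set Implicit Arguments. Unset Strict Implicit. Unset Printing Implicit Defensive.
Import Order.TTheory GRing.Theory Num.Theory.
Local Open Scope ring_scope.
Local Open Scope classical_set_scope.

Definition returns (R : realType) : seq R := [:: -2; -1; 0; 1; 3 / 2; 2].

(* CRRA utility u_1(w; alpha): w^alpha/alpha for alpha > 0, ln w for alpha = 0.
   Valued in extended reals so that ln 0 = -oo (wealth can hit 0 when b = 1/2, x = -2). *)
Definition u1 (R : realType) (alpha w : R) : \bar R :=
  if alpha == 0 then (if 0 < w then (ln w)%:E else -oo%E)
  else ((w `^ alpha) / alpha)%:E.

(* p d d' x = P(d_{n+1} = d', X^d = x | d_n = d). *)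
Section Bellman.
Variables (R : realType) (D : finType) (p : D -> D -> R -> R) (alpha : R).

(* Vrem m d w = V^*(d, w, H - m): optimal value with m rounds remaining,
   Qrem m d w b = expected continuation value of betting fraction b. *)
Fixpoint Vrem (m : nat) : D -> R -> \bar R :=
  match m with
  | 0 => fun _ w => u1 alpha w
  | m'.+1 => fun d w =>
      ereal_sup [set (\sum_(d' : D) \sum_(x <- returns R)
                        (p d d' x)%:E * Vrem m' d' (w * (1 + b * x)))%E
                | b in [set b : R | 0 <= b <= 1 / 2]]
  end.

Definition Qrem (m : nat) (d : D) (w b : R) : \bar R :=
  (\sum_(d' : D) \sum_(x <- returns R) (p d d' x)%:E * Vrem m d' (w * (1 + b * x)))%E.

End Bellman.

(* V^*(d, w, n) for horizon H (meaningful for n <= H). *)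
Definition Vstar (R : realType) (D : finType) (p : D -> D -> R -> R) (alpha : R)
  (H : nat) (d : D) (w : R) (n : nat) : \bar R := Vrem p alpha (H - n) d w.

Definition opt_bets (R : realType) (D : finType) (p : D -> D -> R -> R) (alpha : R)
  (H : nat) (d : D) (w : R) (n : nat) : set R :=
  [set b : R | 0 <= b <= 1 / 2 /\
     Qrem p alpha (H - n.+1) d w b = Vstar p alpha H d w n].

(* Main.v *)
Require Import Defs.
From HB Require Import structures.
From mathcomp Require Import all_boot all_order all_algebra.
From mathcomp Require Import all_classical all_reals all_analysis.
Import Order.TTheory GRing.Theory Num.Theory.
Local Open Scope ring_scope.
Local Open Scope classical_set_scope.

Set Implicit Arguments. Unset Strict Implicit.

Section Aux.
Variable R : realType.
Local Open Scope ereal_scope.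

Lemma pmuleD (k : R) (a b : \bar R) : (0 < k)%R ->
  k%:E * (a + b) = k%:E * a + k%:E * b.
Proof.
move=> k0.
case: a => [a| |]; case: b => [b| |] //=;
  rewrite ?gt0_mulye ?gt0_mulNye ?(muleC k%:E) ?gt0_mulye ?gt0_mulNye //;
  rewrite ?(muleC _ k%:E) -?EFinM -?EFinD ?mulrDr //.
Qed.

Definition aff (k r : R) (e : \bar R) := k%:E * e + r%:E.

Lemma aff_le (k r : R) (a b : \bar R) : (0 < k)%R ->
  (aff k r a <= aff k r b) = (a <= b).
Proof.
move=> k0; rewrite /aff leeD2rE // lee_pmul2l //.
Qed.

Lemma aff_surj (k r : R) (t : \bar R) : (0 < k)%R ->
  aff k r (k^-1%:E * (t - r%:E)) = t.
Proof.
move=> k0; rewrite /aff.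
case: t => [t| |] /=.
- rewrite -EFinB -!EFinM -EFinD; congr (_%:E).
  by rewrite mulrA mulfV ?gt_eqF // mul1r subrK.
- by rewrite addye // mulr_infty gtr0_sg ?invr_gt0 // mul1e mulr_infty gtr0_sg // mul1e.
- by rewrite addNye mulr_infty gtr0_sg ?invr_gt0 // mul1e mulr_infty gtr0_sg // mul1e.
Qed.

Lemma aff_sup (k r : R) (S : set (\bar R)) : (0 < k)%R ->
  ereal_sup [set aff k r s | s in S] = aff k r (ereal_sup S).
Proof.
move=> k0; apply/eqP; rewrite eq_le; apply/andP; split.
- apply: ge_ereal_sup => _ [s Ss <-].
  by rewrite aff_le //; apply: ereal_sup_ubound.
- set t := ereal_sup [set _ | _ in _].
  rewrite -(aff_surj r t k0) aff_le //.
  apply: ge_ereal_sup => s Ss.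
  rewrite -(aff_le r _ _ k0) aff_surj //.
  by apply: ereal_sup_ubound; exists s.
Qed.
End Aux.
Section Main.
Variables (R : realType) (D : finType) (p : D -> D -> R -> R) (alpha : R).
Local Open Scope ereal_scope.

Lemma pmule_sum (I : Type) (s : seq I) (P : pred I) (F : I -> \bar R) (k : R) :
  (0 < k)%R -> k%:E * (\sum_(i <- s | P i) F i) = \sum_(i <- s | P i) k%:E * F i.
Proof.
move=> k0; elim/big_rec2: _ => [|i a b _ <-]; first by rewrite mule0.
by rewrite pmuleD.
Qed.

Lemma sum_aff (d : D) (k r : R) (F : D -> R -> \bar R) :
  (\sum_(d' : D) \sum_(x <- returns R) p d d' x = 1)%R -> (0 < k)%R ->
  \sum_(d' : D) \sum_(x <- returns R) (p d d' x)%:E * aff k r (F d' x) =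
  aff k r (\sum_(d' : D) \sum_(x <- returns R) (p d d' x)%:E * F d' x).
Proof.
move=> hs k0.
have e : forall d' x, (p d d' x)%:E * aff k r (F d' x) =
   k%:E * ((p d d' x)%:E * F d' x) + (p d d' x * r)%:E.
  move=> d' x; rewrite /aff muleDr ?fin_num_adde_defl // muleCA EFinM //.
under eq_bigr => d' _ do under eq_bigr => x _ do rewrite e.
under eq_bigr => d' _ do rewrite big_split /=.
rewrite big_split /= /aff pmule_sum //; congr (_ + _).
  by apply: eq_bigr => d' _; rewrite pmule_sum.
under eq_bigr => d' _ do rewrite sumEFin.
rewrite sumEFin; congr (_%:E).
under eq_bigr => d' _ do rewrite -mulr_suml.
by rewrite -mulr_suml hs mul1r.
Qed.
End Main.
From mathcomp Require Import lra.
Local Open Scope ring_scope.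
Section Main2.
Variables (R : realType) (D : finType) (p : D -> D -> R -> R) (alpha : R).
Local Open Scope ereal_scope.

Definition kc (c : R) : R := if alpha == 0%R then 1%R else (c `^ alpha)%R.
Definition rc (c : R) : R := if alpha == 0%R then ln c else 0%R.

Lemma kc_gt0 c : (0 < c)%R -> (0 < kc c)%R.
Proof. by move=> c0; rewrite /kc; case: ifP => _ //; rewrite powR_gt0. Qed.

Lemma u1_hom c w : (0 < c)%R -> (0 <= w)%R ->
  u1 alpha (c * w) = aff (kc c) (rc c) (u1 alpha w).
Proof.
move=> c0 w0; rewrite /u1 /aff /kc /rc; case: ifP => _.
  rewrite pmulr_rgt0 // mul1e; case: ifP => w0'.
    by rewrite lnM ?posrE // EFinD addeC.
  by rewrite addNye.
by rewrite adde0 -EFinM powRM ?(ltW c0) // mulrA.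
Qed.

Lemma returns_ge (x : R) : x \in returns R -> (-2 <= x)%R.
Proof.
have : all (fun x : R => -2 <= x)%R (returns R).
  rewrite /=; repeat (apply/andP; split) => //; lra.
by move/allP => h /h.
Qed.

Lemma step_nonneg (w b x : R) : (0 <= w)%R -> (0 <= b <= 1/2)%R ->
  x \in returns R -> (0 <= w * (1 + b * x))%R.
Proof.
move=> w0 /andP[b0 b1] /returns_ge hx; apply: mulr_ge0 => //; nra.
Qed.

Lemma Qrem_hom_gen m c (IH : forall d w, (0 <= w)%R ->
    Vrem p alpha m d (c * w) = aff (kc c) (rc c) (Vrem p alpha m d w))
  (p_sum1 : forall d, (\sum_(d' : D) \sum_(x <- returns R) p d d' x = 1)%R)
  d w b : (0 < c)%R -> (0 <= w)%R -> (0 <= b <= 1/2)%R ->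
  Qrem p alpha m d (c * w) b = aff (kc c) (rc c) (Qrem p alpha m d w b).
Proof.
move=> c0 w0 hb; rewrite /Qrem -sum_aff //; last exact: kc_gt0.
apply: eq_bigr => d' _; rewrite big_seq [RHS]big_seq; apply: eq_bigr => x hx.
by rewrite -mulrA IH // step_nonneg.
Qed.

Lemma Vrem_hom
  (p_sum1 : forall d, (\sum_(d' : D) \sum_(x <- returns R) p d d' x = 1)%R)
  c m : (0 < c)%R -> forall d w, (0 <= w)%R ->
    Vrem p alpha m d (c * w) = aff (kc c) (rc c) (Vrem p alpha m d w).
Proof.
move=> c0; elim: m => [|m IH] d w w0 /=; first exact: u1_hom.
rewrite -aff_sup; last exact: kc_gt0.
rewrite image_comp; congr ereal_sup; apply: eq_imagel => b hb /=.
exact: (Qrem_hom_gen IH).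
Qed.
End Main2.
Local Open Scope ring_scope.
Unset Implicit Arguments.
Lemma aff_inj (R : realType) (k r : R) (a b : \bar R) : (0 < k)%R ->
  aff k r a = aff k r b -> a = b.
Proof.
move=> k0 e; apply/eqP; rewrite eq_le.
by rewrite -(aff_le r a b k0) -(aff_le r b a k0) e lexx.
Qed.

Theorem theorem1 (R : realType) (D : finType) (p : D -> D -> R -> R)
  (alpha : R) (H : nat)
  (p_ge0 : forall d d' x, 0 <= p d d' x)
  (p_sum1 : forall d, \sum_(d' : D) \sum_(x <- returns R) p d d' x = 1)
  (alpha_ge0 : 0 <= alpha) :
  forall (d : D) (n : nat) (w w' : R), (n < H)%N -> 0 < w -> 0 < w' ->
    opt_bets p alpha H d w n = opt_bets p alpha H d w' n.
Proof.
move=> d n w w' hn w0 w'0.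
set c := w' / w.
have c0 : 0 < c by rewrite /c divr_gt0.
have -> : w' = c * w by rewrite /c divfK // gt_eqF.
have hQ : forall b, 0 <= b <= 1/2 -> Qrem p alpha (H - n.+1) d (c * w) b =
    aff (kc alpha c) (rc alpha c) (Qrem p alpha (H - n.+1) d w b).
  move=> b hb; apply: Qrem_hom_gen => //; last exact: ltW.
  by move=> d' w1 hw1; apply: Vrem_hom.
have hV : Vstar p alpha H d (c * w) n =
    aff (kc alpha c) (rc alpha c) (Vstar p alpha H d w n).
  by rewrite /Vstar Vrem_hom // ltW.
rewrite /opt_bets; apply/seteqP; split => b [hb e]; split => //.
  by rewrite hQ // hV e.
apply: (@aff_inj R (kc alpha c) (rc alpha c)); first exact: kc_gt0.
by rewrite -hQ // -hV.
Qed.
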